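(* Let $A$ be a weakly complete finitely generated $\mathcal V$-algebra and let $\mathfrak P$ be an open prime ideal of $A$. Put $A_{[\mathfrak P]}:=\varinjlim_{f\in A\setminus\mathfrak P}A[f]$ (a filtered direct limit). Then $A_{[\mathfrak P]}$ is a local ring whose maximal ideal is $\mathfrak P A_{[\mathfrak P]}:=\varinjlim_{f\notin\mathfrak P}\mathfrak P A[f]$, and its residue field $A_{[\mathfrak P]}/\mathfrak PA_{[\mathfrak P]}$ is isomorphic to the field of fractions of $A/\mathfrak P$.
   Context: $\mathcal V$ is a complete discrete valuation ring with fraction field $K$ of characteristic $0$, perfect residue field $k$ of characteristic $p>0$ and uniformizer $\pi$. A weakly complete finitely generated $\mathcal V$-algebra (f.c.t.f. algebra) is a quotient of the weak completion $\mathcal V[t_1,\dots,t_d]^\dagger$ (Monsky–Washnitzer) of a polynomial ring, equipped with the $p$-adic topology. For $f\in A$, $A[f]$ denotes the weak completion of the localization $A_f$. An ideal is open if it contains a power of $\pi$. *)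

(* Defs.v *)
From HB Require Import structures.
From mathcomp Require Import all_boot all_order all_algebra.
Set Implicit Arguments. Unset Strict Implicit. Unset Printing Implicit Defensive.
Import Order.TTheory GRing.Theory Num.Theory.
Local Open Scope ring_scope.

Definition pdiv (R : pzRingType) (pi : R) (m : nat) (x : R) : Prop :=
  exists y, x = pi ^+ m * y.

Definition padic_separated (R : pzRingType) (pi : R) : Prop :=
  forall x, (forall m, pdiv pi m x) -> x = 0.

Definition padic_lim (R : pzRingType) (pi : R) (u : nat -> R) (s : R) : Prop :=
  forall m, exists N, forall n, (N <= n)%N -> pdiv pi m (s - u n).

Definition is_unit (R : pzRingType) (x : R) : Prop := exists y, x * y = 1.

(* V complete DVR with uniformizer pi, Frac V of char 0, residue field
   V/(pi) perfect of characteristic p. *)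
Record cdvr (V : idomainType) (pi : V) (p : nat) : Prop := {
  cdvr_pi_nz : pi != 0;
  cdvr_pi_nonunit : pi \notin GRing.unit;
  cdvr_factor : forall x : V, x != 0 ->
      exists (u : V) (n : nat), u \is a GRing.unit /\ x = u * pi ^+ n;
  cdvr_separated : padic_separated pi;
  cdvr_complete : forall s : nat -> V,
      (forall m, exists N, forall n k, (N <= n)%N -> (N <= k)%N ->
          pdiv pi m (s n - s k)) ->
      exists l, padic_lim pi s l;
  cdvr_char0 : forall n : nat, n%:R = 0 :> V -> n = 0%N;
  cdvr_p_prime : prime p;
  cdvr_res_char : pdiv pi 1 (p%:R : V);
  cdvr_res_perfect : forall x : V, exists y, pdiv pi 1 (x - y ^+ p)
}.

Definition mdeg (d : nat) (al : {ffun 'I_d -> nat}) : nat := (\sum_(i < d) al i)%N.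

Definition overconv (V : idomainType) (pi : V) (d : nat)
    (a : {ffun 'I_d -> nat} -> V) : Prop :=
  exists m b : nat, (0 < m)%N /\
    forall al, pdiv pi (mdeg al %/ m - b) (a al).

(* partial sum over all monomials of total degree <= n of
   sum_al j(a_al) x^al, where j : V -> R is the structure map *)
Definition psum (V : Type) (R : comPzRingType) (j : V -> R) (d : nat)
    (a : {ffun 'I_d -> nat} -> V) (x : 'I_d -> R) (n : nat) : R :=
  \sum_(al : {ffun 'I_d -> 'I_n.+1} |
          (mdeg [ffun i => nat_of_ord (al i)] <= n)%N)
     j (a [ffun i => nat_of_ord (al i)]) * \prod_(i < d) x i ^+ al i.

Definition series_converges (V : Type) (R : comPzRingType) (j : V -> R)
    (pi : V) (d : nat) (a : {ffun 'I_d -> nat} -> V) (x : 'I_d -> R) (s : R)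
    : Prop :=
  padic_lim (j pi) (psum j a x) s.

Definition weakly_complete (V : idomainType) (R : comPzRingType) (j : V -> R)
    (pi : V) : Prop :=
  padic_separated (j pi) /\
  forall (d : nat) (a : {ffun 'I_d -> nat} -> V) (x : 'I_d -> R),
    overconv pi a -> exists s, series_converges j pi a x s.

Definition weakly_fg (V : idomainType) (R : comPzRingType) (j : V -> R)
    (pi : V) : Prop :=
  exists (d : nat) (x : 'I_d -> R), forall r : R,
    exists a : {ffun 'I_d -> nat} -> V, overconv pi a /\ series_converges j pi a x r.

Definition fctf (V : idomainType) (R : comPzRingType) (j : V -> R) (pi : V)
    : Prop :=
  weakly_complete j pi /\ weakly_fg j pi.

Definition is_ideal (R : pzRingType) (I : R -> Prop) : Prop :=
  I 0 /\ (forall x y, I x -> I y -> I (x + y)) /\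
  (forall r x, I x -> I (r * x)).

Definition is_prime_ideal (R : pzRingType) (I : R -> Prop) : Prop :=
  is_ideal I /\ ~ I 1 /\ (forall x y, I (x * y) -> I x \/ I y).

Definition ext_ideal (A B : comPzRingType) (phi : A -> B) (P : A -> Prop)
    (y : B) : Prop :=
  exists (n : nat) (a : 'I_n -> A) (b : 'I_n -> B),
    (forall i, P (a i)) /\ y = \sum_(i < n) phi (a i) * b i.

(* phi : A -> B exhibits B as A[f], the weak completion of A_f: B is weakly
   complete, phi f is a unit, and B is initial among weakly complete
   A-algebras in which f becomes invertible. *)
Definition is_weak_completion_loc (V : idomainType) (pi : V)
    (A : comPzRingType) (j : V -> A) (f : A)
    (B : comPzRingType) (phi : {rmorphism A -> B}) : Prop :=
  weakly_complete (phi \o j) pi /\ is_unit (phi f) /\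
  forall (C : comPzRingType) (psi : {rmorphism A -> C}),
    weakly_complete (psi \o j) pi -> is_unit (psi f) ->
    exists chi : {rmorphism B -> C},
      (forall a, chi (phi a) = psi a) /\
      forall chi' : {rmorphism B -> C}, (forall a, chi' (phi a) = psi a) ->
        forall b, chi' b = chi b.

Definition local_with_max (L : comPzRingType) (M : L -> Prop) : Prop :=
  is_ideal M /\ ~ M 1 /\ forall x, ~ M x -> is_unit x.

(* Main.v *)
Require Import Defs.
From HB Require Import structures.
From mathcomp Require Import all_boot all_order all_algebra.
From mathcomp Require Import boolp.
From mathcomp Require Import ring zify.
Set Implicit Arguments. Unset Strict Implicit. Unset Printing Implicit Defensive.
Import Order.TTheory GRing.Theory Num.Theory.
Local Open Scope ring_scope.


Record preRing := PreRing {
  pT : choiceType;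
  pE : pT -> pT -> Prop;
  pErefl : forall x, pE x x;
  pEsym : forall x y, pE x y -> pE y x;
  pEtrans : forall x y z, pE x y -> pE y z -> pE x z;
  pz : pT; po : pT; popp : pT -> pT; padd : pT -> pT -> pT; pmul : pT -> pT -> pT;
  pEopp : forall x x', pE x x' -> pE (popp x) (popp x');
  pEadd : forall x x' y y', pE x x' -> pE y y' -> pE (padd x y) (padd x' y');
  pEmul : forall x x' y y', pE x x' -> pE y y' -> pE (pmul x y) (pmul x' y');
  paddA : forall x y w, pE (padd x (padd y w)) (padd (padd x y) w);
  paddC : forall x y, pE (padd x y) (padd y x);
  padd0 : forall x, pE (padd pz x) x;
  paddN : forall x, pE (padd (popp x) x) pz;
  pmulA : forall x y w, pE (pmul x (pmul y w)) (pmul (pmul x y) w);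
  pmulC : forall x y, pE (pmul x y) (pmul y x);
  pmul1 : forall x, pE (pmul po x) x;
  pmulDl : forall x y w, pE (pmul (padd x y) w) (padd (pmul x w) (pmul y w))
}.

Section GQ.
Variable pr : preRing.
Local Notation T := (pT pr).
Local Notation E := (@pE pr).

Definition canon (x : T) : T :=
  xchoose (ex_intro (fun y => `[< E x y >]) x (introT (asboolP _) (pErefl x))).

Lemma canonE x : E x (canon x).
Proof. rewrite /canon; set e := ex_intro _ _ _; by have /asboolP := xchooseP e. Qed.

Lemma canon_eq x y : E x y -> canon x = canon y.
Proof.
move=> Exy; apply: eq_xchoose => w; apply/asboolP/asboolP => H.
  exact: pEtrans (pEsym Exy) H.
exact: pEtrans Exy H.
Qed.

Lemma canon_idem x : canon (canon x) == canon x.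
Proof. by apply/eqP; apply: canon_eq; apply: pEsym; apply: canonE. Qed.

Definition Q := {x : T | canon x == x}.
HB.instance Definition _ := Choice.on Q.

Definition mk (x : T) : Q := exist _ (canon x) (canon_idem x).

Lemma mkK (q : Q) : mk (proj1_sig q) = q.
Proof. case: q => x Hx; apply: val_inj => /=. exact/eqP. Qed.

Lemma mk_eq x y : mk x = mk y <-> E x y.
Proof.
split=> [H|H].
  have : canon x = canon y by move: (f_equal (@proj1_sig _ _) H).
  move=> H'; apply: pEtrans (canonE x) _; rewrite H'; exact: pEsym (canonE y).
by apply: val_inj => /=; apply: canon_eq.
Qed.

Lemma mk_surj (q : Q) : exists x, q = mk x.
Proof. by exists (proj1_sig q); rewrite mkK. Qed.

Lemma mk_val x : E (proj1_sig (mk x)) x.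
Proof. exact: pEsym (canonE x). Qed.

Definition qopp (q : Q) := mk (popp (proj1_sig q)).
Definition qadd (q r : Q) := mk (padd (proj1_sig q) (proj1_sig r)).
Definition qmul (q r : Q) := mk (pmul (proj1_sig q) (proj1_sig r)).

Lemma mk_opp x : qopp (mk x) = mk (popp x).
Proof. by apply/mk_eq; apply: pEopp; apply: mk_val. Qed.
Lemma mk_add x y : qadd (mk x) (mk y) = mk (padd x y).
Proof. by apply/mk_eq; apply: pEadd; apply: mk_val. Qed.
Lemma mk_mul x y : qmul (mk x) (mk y) = mk (pmul x y).
Proof. by apply/mk_eq; apply: pEmul; apply: mk_val. Qed.

Lemma qaddA : associative qadd.
Proof.
move=> a b c; case: (mk_surj a) (mk_surj b) (mk_surj c) => x -> [y ->] [w ->].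
by rewrite !mk_add; apply/mk_eq; apply: paddA.
Qed.
Lemma qaddC : commutative qadd.
Proof. move=> a b; case: (mk_surj a) (mk_surj b) => x -> [y ->]; by rewrite !mk_add; apply/mk_eq; apply: paddC. Qed.
Lemma qadd0 : left_id (mk (pz pr)) qadd.
Proof. move=> a; case: (mk_surj a) => x ->; by rewrite !mk_add; apply/mk_eq; apply: padd0. Qed.
Lemma qaddN : left_inverse (mk (pz pr)) qopp qadd.
Proof. move=> a; case: (mk_surj a) => x ->; by rewrite mk_opp !mk_add; apply/mk_eq; apply: paddN. Qed.

HB.instance Definition _ := GRing.isZmodule.Build Q qaddA qaddC qadd0 qaddN.

Lemma qmulA : associative qmul.
Proof.
move=> a b c; case: (mk_surj a) (mk_surj b) (mk_surj c) => x -> [y ->] [w ->].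
by rewrite !mk_mul; apply/mk_eq; apply: pmulA.
Qed.
Lemma qmulC : commutative qmul.
Proof. move=> a b; case: (mk_surj a) (mk_surj b) => x -> [y ->]; by rewrite !mk_mul; apply/mk_eq; apply: pmulC. Qed.
Lemma qmul1 : left_id (mk (po pr)) qmul.
Proof. move=> a; case: (mk_surj a) => x ->; by rewrite !mk_mul; apply/mk_eq; apply: pmul1. Qed.
Lemma qmulDl : left_distributive qmul (@GRing.add Q).
Proof.
move=> a b c; case: (mk_surj a) (mk_surj b) (mk_surj c) => x -> [y ->] [w ->].
have hD : forall a b : Q, a + b = qadd a b by [].
rewrite !hD !mk_add !mk_mul; apply/mk_eq; apply: pEtrans (pmulDl x y w) _.
by apply: pEadd; apply: pEmul; apply: pEsym; apply: mk_val.
Qed.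

HB.instance Definition _ := GRing.Zmodule_isComPzRing.Build Q qmulA qmulC qmul1 qmulDl.

Lemma mkD x y : mk (padd x y) = mk x + mk y. Proof. by rewrite -mk_add. Qed.
Lemma mkM x y : mk (pmul x y) = mk x * mk y. Proof. by rewrite -mk_mul. Qed.
Lemma mkN x : mk (popp x) = - mk x. Proof. by rewrite -mk_opp. Qed.
Lemma mk0 : mk (pz pr) = 0. Proof. by []. Qed.
Lemma mk1 : mk (po pr) = 1. Proof. by []. Qed.

End GQ.

Section RQ.
Variables (R : comPzRingType) (I : R -> Prop) (HI : is_ideal I).
Let I0 : I 0. Proof. by case: HI. Qed.
Let ID x y : I x -> I y -> I (x + y). Proof. by case: HI => _ [H _]; apply: H. Qed.
Let IM r x : I x -> I (r * x). Proof. by case: HI => _ [_ H]; apply: H. Qed.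
Let IN x : I x -> I (- x). Proof. by move=> H; rewrite -mulN1r; apply: IM. Qed.
Let IE x y : x = y -> I x -> I y. Proof. by move=> ->. Qed.

Definition Erq (x y : R) := I (x - y).
Let refl x : Erq x x. Proof. by rewrite /Erq subrr. Qed.
Let sym x y : Erq x y -> Erq y x. Proof. by move=> H; apply: IE (IN H); rewrite opprB. Qed.
Let trans x y z : Erq x y -> Erq y z -> Erq x z.
Proof. by move=> H1 H2; apply: IE (ID H1 H2); rewrite addrA subrK. Qed.
Let eqE x y : x = y -> Erq x y. Proof. by move=> ->. Qed.
Let Eopp x x' : Erq x x' -> Erq (- x) (- x').
Proof. by move=> H; rewrite /Erq; apply: IE (IN H); ring. Qed.
Let Eadd x x' y y' : Erq x x' -> Erq y y' -> Erq (x + y) (x' + y').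
Proof. by move=> H1 H2; rewrite /Erq; apply: IE (ID H1 H2); ring. Qed.
Let Emul x x' y y' : Erq x x' -> Erq y y' -> Erq (x * y) (x' * y').
Proof. by move=> H1 H2; rewrite /Erq; apply: IE (ID (IM y H1) (IM x' H2)); ring. Qed.

Definition rqpr : preRing :=
  @PreRing R Erq refl sym trans 0 1 -%R +%R *%R Eopp Eadd Emul
    (fun x y z => eqE (addrA x y z)) (fun x y => eqE (addrC x y))
    (fun x => eqE (add0r x)) (fun x => eqE (addNr x))
    (fun x y z => eqE (mulrA x y z)) (fun x y => eqE (mulrC x y))
    (fun x => eqE (mul1r x)) (fun x y z => eqE (mulrDl x y z)).

Definition RQ := Q rqpr.
Definition rq (x : R) : RQ := mk (pr:=rqpr) x.

Lemma rq_is_zmod : zmod_morphism rq.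
Proof. by move=> x y; rewrite /rq -mkN -mkD. Qed.
HB.instance Definition _ := GRing.isZmodMorphism.Build R RQ rq rq_is_zmod.
Lemma rq_is_monoid : monoid_morphism rq.
Proof. by split=> // x y; rewrite /rq -mkM. Qed.
HB.instance Definition _ := GRing.isMonoidMorphism.Build R RQ rq rq_is_monoid.

Lemma rq_eq0 x : rq x = 0 <-> I x.
Proof.
rewrite -[0](mk0 rqpr) /rq; split => [/mk_eq|H]; first by rewrite /= /Erq subr0.
by apply/mk_eq; rewrite /= /Erq subr0.
Qed.

End RQ.


Section Img.
Variables (T : choiceType) (S : comPzRingType) (h : T -> S).
Variables (z o : T) (opp : T -> T) (add mul : T -> T -> T).
Hypotheses (hz : h z = 0) (ho : h o = 1) (hopp : forall x, h (opp x) = - h x)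
  (hadd : forall x y, h (add x y) = h x + h y) (hmul : forall x y, h (mul x y) = h x * h y).
Definition Eim x y := h x = h y.
Let refl x : Eim x x. Proof. by []. Qed.
Let sym x y : Eim x y -> Eim y x. Proof. by rewrite /Eim. Qed.
Let trans x y w : Eim x y -> Eim y w -> Eim x w. Proof. by rewrite /Eim => ->. Qed.
Let Eopp x x' : Eim x x' -> Eim (opp x) (opp x'). Proof. by rewrite /Eim !hopp => ->. Qed.
Let Eadd x x' y y' : Eim x x' -> Eim y y' -> Eim (add x y) (add x' y').
Proof. by rewrite /Eim !hadd => -> ->. Qed.
Let Emul x x' y y' : Eim x x' -> Eim y y' -> Eim (mul x y) (mul x' y').
Proof. by rewrite /Eim !hmul => -> ->. Qed.
Let addA x y w : Eim (add x (add y w)) (add (add x y) w). Proof. by rewrite /Eim !hadd addrA. Qed.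
Let addC x y : Eim (add x y) (add y x). Proof. by rewrite /Eim !hadd addrC. Qed.
Let add0 x : Eim (add z x) x. Proof. by rewrite /Eim !hadd hz add0r. Qed.
Let addN x : Eim (add (opp x) x) z. Proof. by rewrite /Eim !hadd hopp hz addNr. Qed.
Let mulA x y w : Eim (mul x (mul y w)) (mul (mul x y) w). Proof. by rewrite /Eim !hmul mulrA. Qed.
Let mulC x y : Eim (mul x y) (mul y x). Proof. by rewrite /Eim !hmul mulrC. Qed.
Let mul1 x : Eim (mul o x) x. Proof. by rewrite /Eim !hmul ho mul1r. Qed.
Let mulDl x y w : Eim (mul (add x y) w) (add (mul x w) (mul y w)).
Proof. by rewrite /Eim !hmul !hadd !hmul mulrDl. Qed.

Definition impr : preRing := @PreRing T Eim refl sym trans z o opp add mul Eopp Eadd Emul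
  addA addC add0 addN mulA mulC mul1 mulDl.
Definition IM := Q impr.
Definition imk (x : T) : IM := mk (pr:=impr) x.
Definition incl (d : IM) : S := h (proj1_sig d).
Lemma incl_mk x : incl (imk x) = h x.
Proof. exact: (mk_val (pr:=impr) x). Qed.
Lemma imk_eq x y : imk x = imk y <-> h x = h y.
Proof. exact: (mk_eq (pr:=impr)). Qed.
Lemma imkD x y : imk (add x y) = imk x + imk y. Proof. exact: (mkD (pr:=impr)). Qed.
Lemma imkM x y : imk (mul x y) = imk x * imk y. Proof. exact: (mkM (pr:=impr)). Qed.
Lemma imkN x : imk (opp x) = - imk x. Proof. exact: (mkN (pr:=impr)). Qed.
Lemma imk0 : imk z = 0. Proof. by []. Qed.
Lemma imk1 : imk o = 1. Proof. by []. Qed.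
Lemma imk_surj (d : IM) : exists x, d = imk x. Proof. exact: (mk_surj (pr:=impr)). Qed.

Lemma incl_is_zmod : zmod_morphism incl.
Proof.
move=> a b; case: (imk_surj a) (imk_surj b) => x -> [y ->].
by rewrite -imkN -imkD !incl_mk hadd hopp.
Qed.
HB.instance Definition _ := GRing.isZmodMorphism.Build IM S incl incl_is_zmod.
Lemma incl_is_monoid : monoid_morphism incl.
Proof.
split; first by rewrite -imk1 incl_mk.
move=> a b; case: (imk_surj a) (imk_surj b) => x -> [y ->].
by rewrite -imkM !incl_mk hmul.
Qed.
HB.instance Definition _ := GRing.isMonoidMorphism.Build IM S incl incl_is_monoid.
End Img.

Section Kappa.
Variables (A : comPzRingType) (P : A -> Prop) (HP : is_prime_ideal P).
Let P0 : P 0. Proof. by case: HP => [[]]. Qed.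
Let PD x y : P x -> P y -> P (x + y). Proof. by case: HP => [[_ [H _]] _]; apply: H. Qed.
Let PM r x : P x -> P (r * x). Proof. by case: HP => [[_ [_ H]] _]; apply: H. Qed.
Let P1 : ~ P 1. Proof. by case: HP => _ []. Qed.
Let Pprime x y : P (x * y) -> P x \/ P y. Proof. by case: HP => _ [_ H]; apply: H. Qed.
Let PE x y : x = y -> P x -> P y. Proof. by move=> ->. Qed.
Let PMr r x : P x -> P (x * r). Proof. by rewrite mulrC; apply: PM. Qed.
Let PN x : P x -> P (- x). Proof. by move=> H; rewrite -mulN1r; apply: PM. Qed.
Let nPM x y : ~ P x -> ~ P y -> ~ P (x * y).
Proof. by move=> Hx Hy /Pprime []. Qed.

Definition FT := {x : A * A | `[< ~ P x.2 >]}.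
HB.instance Definition _ := Choice.on FT.
Definition num (x : FT) := (proj1_sig x).1.
Definition den (x : FT) := (proj1_sig x).2.
Lemma denP (x : FT) : ~ P (den x).
Proof. case: x => [[a s]] H; rewrite /den /=; exact/asboolP. Qed.
Definition fr (a s : A) (H : ~ P s) : FT := exist _ (a, s) (introT (asboolP _) H).

Definition Ek (x y : FT) := P (num x * den y - num y * den x).
Let refl x : Ek x x. Proof. by rewrite /Ek subrr. Qed.
Let sym x y : Ek x y -> Ek y x.
Proof. by rewrite /Ek => H; apply: PE (PN H); ring. Qed.
Let trans x y w : Ek x y -> Ek y w -> Ek x w.
Proof.
rewrite /Ek => H1 H2.
have : P (den y * (num x * den w - num w * den x)).
  by apply: PE (PD (PM (den w) H1) (PM (den x) H2)); ring.
by case/Pprime => [Hd|//]; case: (denP Hd).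
Qed.
Definition kz : FT := fr 0 P1.
Definition ko : FT := fr 1 P1.
Definition kopp (x : FT) : FT := fr (- num x) (@denP x).
Definition kadd (x y : FT) : FT :=
  fr (num x * den y + num y * den x) (nPM (@denP x) (@denP y)).
Definition kmul (x y : FT) : FT := fr (num x * num y) (nPM (@denP x) (@denP y)).
Let Eopp x x' : Ek x x' -> Ek (kopp x) (kopp x').
Proof. by rewrite /Ek /= => H; apply: PE (PN H); rewrite /kadd /kmul /kopp /kz /ko /fr /num /den /=; ring. Qed.
Let Eadd x x' y y' : Ek x x' -> Ek y y' -> Ek (kadd x y) (kadd x' y').
Proof.
rewrite /Ek /= => H1 H2.
apply: PE (PD (PM (den y * den y') H1) (PM (den x * den x') H2)).
rewrite /kadd /kmul /kopp /kz /ko /fr /num /den /=; ring.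
Qed.
Let Emul x x' y y' : Ek x x' -> Ek y y' -> Ek (kmul x y) (kmul x' y').
Proof.
rewrite /Ek /= => H1 H2.
apply: PE (PD (PM (num y * den y') H1) (PM (num x' * den x) H2)).
rewrite /kadd /kmul /kopp /kz /ko /fr /num /den /=; ring.
Qed.
Let E0 x y : num x * den y - num y * den x = 0 -> Ek x y.
Proof. by rewrite /Ek => ->. Qed.
Let addA x y w : Ek (kadd x (kadd y w)) (kadd (kadd x y) w).
Proof. by apply: E0; rewrite /kadd /kmul /kopp /kz /ko /fr /num /den /=; ring. Qed.
Let addC x y : Ek (kadd x y) (kadd y x).
Proof. by apply: E0; rewrite /kadd /kmul /kopp /kz /ko /fr /num /den /=; ring. Qed.
Let add0 x : Ek (kadd kz x) x.
Proof. by apply: E0; rewrite /kadd /kmul /kopp /kz /ko /fr /num /den /=; ring. Qed.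
Let addN x : Ek (kadd (kopp x) x) kz.
Proof. by apply: E0; rewrite /kadd /kmul /kopp /kz /ko /fr /num /den /=; ring. Qed.
Let mulA x y w : Ek (kmul x (kmul y w)) (kmul (kmul x y) w).
Proof. by apply: E0; rewrite /kadd /kmul /kopp /kz /ko /fr /num /den /=; ring. Qed.
Let mulC x y : Ek (kmul x y) (kmul y x).
Proof. by apply: E0; rewrite /kadd /kmul /kopp /kz /ko /fr /num /den /=; ring. Qed.
Let mul1 x : Ek (kmul ko x) x.
Proof. by apply: E0; rewrite /kadd /kmul /kopp /kz /ko /fr /num /den /=; ring. Qed.
Let mulDl x y w : Ek (kmul (kadd x y) w) (kadd (kmul x w) (kmul y w)).
Proof. by apply: E0; rewrite /kadd /kmul /kopp /kz /ko /fr /num /den /=; ring. Qed.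

Definition kpr : preRing := @PreRing FT Ek refl sym trans kz ko kopp kadd kmul
  Eopp Eadd Emul addA addC add0 addN mulA mulC mul1 mulDl.

Definition K := Q kpr.
HB.instance Definition _ := GRing.ComPzRing.on K.
Definition kmk (x : FT) : K := mk (pr:=kpr) x.
Lemma kmk_eq x y : kmk x = kmk y <-> Ek x y. Proof. exact: (mk_eq (pr:=kpr)). Qed.
Lemma kmk_surj (d : K) : exists x, d = kmk x. Proof. exact: (mk_surj (pr:=kpr)). Qed.
Lemma kmkD x y : kmk (kadd x y) = kmk x + kmk y. Proof. exact: (mkD (pr:=kpr)). Qed.
Lemma kmkM x y : kmk (kmul x y) = kmk x * kmk y. Proof. exact: (mkM (pr:=kpr)). Qed.
Lemma kmkN x : kmk (kopp x) = - kmk x. Proof. exact: (mkN (pr:=kpr)). Qed.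
Lemma kmk0 : kmk kz = 0. Proof. by []. Qed.
Lemma kmk1 : kmk ko = 1. Proof. by []. Qed.

Lemma kone_neq0 : (1 : K) != 0.
Proof.
apply/eqP; rewrite -kmk0 -kmk1 => /kmk_eq; rewrite /Ek /kz /ko /fr /num /den /= => H.
by apply: P1; apply: PE H; ring.
Qed.
HB.instance Definition _ := GRing.PzSemiRing_isNonZero.Build K kone_neq0.

Definition kinvT (x : FT) : FT :=
  match pselect (P (num x)) with left _ => kz | right H => fr (den x) H end.
Definition kinv (q : K) : K := kmk (kinvT (proj1_sig q)).

Lemma Ek_num x y : Ek x y -> P (num x) -> P (num y).
Proof.
rewrite /Ek => H Hx.
have : P (num y * den x) by apply: PE (PD (PN H) (PMr (den y) Hx)); ring.
by case/Pprime => // Hd; case: (denP Hd).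
Qed.

Lemma kinvT_E x y : Ek x y -> Ek (kinvT x) (kinvT y).
Proof.
move=> H; rewrite /kinvT; case: pselect => Hx; case: pselect => Hy.
- exact: refl.
- by case: Hy; apply: Ek_num Hx.
- by case: Hx; apply: Ek_num Hy; apply: sym.
- by move: H; rewrite /Ek /fr /num /den /= => H; apply: PE (PN H); ring.
Qed.

Lemma kinv_mk x : kinv (kmk x) = kmk (kinvT x).
Proof. by apply/kmk_eq; apply: kinvT_E; apply: (mk_val (pr:=kpr)). Qed.

Lemma kmulVf (x : K) : x != 0 -> kinv x * x = 1.
Proof.
case: (kmk_surj x) => w -> Hw; rewrite kinv_mk -kmkM -kmk1; apply/kmk_eq.
rewrite /kinvT; case: pselect => Hn.
  case/eqP: Hw; rewrite -kmk0; apply/kmk_eq; rewrite /Ek /kz /fr /num /den /=.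
  by apply: PE (PMr 1 Hn); rewrite /num; ring.
by apply: E0; rewrite /kmul /ko /fr /num /den /=; ring.
Qed.

Lemma kinv0 : kinv 0 = 0.
Proof.
rewrite -kmk0 kinv_mk /kinvT; case: pselect => // H.
Qed.

HB.instance Definition _ := GRing.ComNzRing_isField.Build K kmulVf kinv0.

Definition alpha (a : A) : K := kmk (fr a P1).

Lemma alpha_is_zmod : zmod_morphism alpha.
Proof.
move=> a b; rewrite /alpha -kmkN -kmkD; apply/kmk_eq; apply: E0.
by rewrite /kadd /kopp /fr /num /den /=; ring.
Qed.
HB.instance Definition _ := GRing.isZmodMorphism.Build A K alpha alpha_is_zmod.
Lemma alpha_is_monoid : monoid_morphism alpha.
Proof.
split; first by rewrite /alpha -kmk1; apply/kmk_eq; apply: E0; rewrite /fr /num /den /ko /=; ring.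
move=> a b; rewrite /alpha -kmkM; apply/kmk_eq; apply: E0.
by rewrite /kmul /fr /num /den /=; ring.
Qed.
HB.instance Definition _ := GRing.isMonoidMorphism.Build A K alpha alpha_is_monoid.

Lemma alpha_eq0 a : alpha a = 0 <-> P a.
Proof.
rewrite /alpha -kmk0; split.
  by move/kmk_eq; rewrite /Ek /fr /kz /num /den /= => H; apply: PE H; ring.
by move=> H; apply/kmk_eq; rewrite /Ek /fr /kz /num /den /=; apply: PE H; ring.
Qed.

Lemma alpha_frac (z : K) : exists a b, ~ P b /\ z = alpha a / alpha b.
Proof.
case: (kmk_surj z) => w ->; exists (num w), (den w); split; first exact: denP.
have Hb : alpha (den w) != 0 by apply/eqP => /alpha_eq0; apply: denP.
apply: (mulIf Hb); rewrite mulfVK //.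
rewrite /alpha -kmkM; apply/kmk_eq; apply: E0.
by rewrite /kmul /fr /num /den /=; ring.
Qed.

End Kappa.


Definition natf d n (al : {ffun 'I_d -> 'I_n}) : {ffun 'I_d -> nat} :=
  [ffun i => nat_of_ord (al i)].

Definition Ssum (R : comPzRingType) d (G : {ffun 'I_d -> nat} -> R) N :=
  \sum_(al : {ffun 'I_d -> 'I_N.+1} | (mdeg (natf al) <= N)%N) G (natf al).

Lemma psumE (V : Type) (R : comPzRingType) (j : V -> R) d a (x : 'I_d -> R) N :
  psum j a x N = Ssum (fun be => j (a be) * \prod_(i < d) x i ^+ be i) N.
Proof.
apply: eq_bigr => al _; congr (_ * _); apply: eq_bigr => i _; by rewrite ffunE.
Qed.

Lemma mdeg_ge d (be : {ffun 'I_d -> nat}) i : (be i <= mdeg be)%N.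
Proof. by rewrite /mdeg (bigD1 i) //= leq_addr. Qed.

Lemma Ssum_stab (R : comPzRingType) d (G : {ffun 'I_d -> nat} -> R) K N :
  (forall be, (K < mdeg be)%N -> G be = 0) -> (K <= N)%N -> Ssum G N = Ssum G K.
Proof.
move=> HG HKN.
have -> : Ssum G N = \sum_(al : {ffun 'I_d -> 'I_N.+1} | (mdeg (natf al) <= K)%N) G (natf al).
  rewrite /Ssum big_mkcond [RHS]big_mkcond; apply: eq_bigr => al _.
  case: (leqP (mdeg (natf al)) K) => H1; first by rewrite (leq_trans H1 HKN).
  by rewrite HG //; case: ifP.
have HKN' : (K.+1 <= N.+1)%N by [].
pose h (al : {ffun 'I_d -> 'I_K.+1}) : {ffun 'I_d -> 'I_N.+1} :=
  [ffun i => widen_ord HKN' (al i)].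
pose h' (be : {ffun 'I_d -> 'I_N.+1}) : {ffun 'I_d -> 'I_K.+1} :=
  [ffun i => inord (be i)].
have nh al : natf (h al) = natf al by apply/ffunP => i; rewrite !ffunE.
rewrite (reindex_onto h h').
  apply: eq_big => al.
    rewrite nh; case: (mdeg _ <= K)%N => //=.
    apply/eqP/ffunP => i; apply: val_inj; rewrite !ffunE /= inordK //.
  by move=> _; rewrite nh.
move=> be Hbe; apply/ffunP => i; apply: val_inj; rewrite !ffunE /= inordK //.
rewrite ltnS; apply: leq_trans Hbe; move: (mdeg_ge (natf be) i); by rewrite ffunE.
Qed.

Lemma wc_nil (V : idomainType) (pi : V) (C : comPzRingType) (jj : {rmorphism V -> C}) n :
  jj pi ^+ n = 0 -> weakly_complete jj pi.
Proof.
move=> H; split.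
  by move=> x /(_ n) [y ->]; rewrite H mul0r.
move=> d a x [m [b [Hm Ha]]].
pose K := (m * (n + b))%N.
exists (psum jj a x K) => m'; exists K => N HN.
rewrite (psumE jj a x K) (psumE jj a x N).
set G := (fun be => _).
have HG : forall be, (K < mdeg be)%N -> G be = 0.
  move=> be Hbe; rewrite /G; case: (Ha be) => y ->.
  have H1 : (n + b <= mdeg be %/ m)%N.
    have := leq_div2r m (ltnW Hbe); by rewrite /K mulKn.
  have He : (n <= mdeg be %/ m - b)%N by move: H1; clear; lia.
  rewrite rmorphM rmorphXn -(subnKC He) exprD H !mul0r.
  by [].
rewrite (Ssum_stab HG HN) subrr; exists 0; by rewrite mulr0.
Qed.


Lemma geom_tel (C : comPzRingType) (z : C) N :
  (1 + z) * \sum_(k < N.+1) (- z) ^+ k = 1 - (- z) ^+ N.+1.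
Proof.
elim: N => [|N IH]; first by rewrite big_ord1 expr0 expr1 mulr1; ring.
rewrite big_ord_recr /= mulrDr IH [(- z) ^+ N.+2]exprS; move: ((- z) ^+ N.+1) => w; ring.
Qed.


Lemma unit_1p (V : idomainType) (pi : V) (C : comPzRingType) (jj : {rmorphism V -> C})
  (HC : weakly_complete jj pi) n (y : C) : (0 < n)%N -> is_unit (1 + jj pi ^+ n * y).
Proof.
move=> Hn.
pose a (al : {ffun 'I_1 -> nat}) : V := (- pi ^+ n) ^+ (mdeg al).
have Ha : overconv pi a.
  exists 1%N, 0%N; split => // al; rewrite divn1 subn0.
  exists ((-1) ^+ mdeg al * pi ^+ (n.-1 * mdeg al)).
  rewrite /a (exprNn (pi ^+ n)) -exprM mulrCA -exprD; congr (_ * _); congr (_ ^+ _).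
  by move: Hn; clear; case: n => // n _; rewrite mulSn.
case: (HC.2 1%N a (fun _ => y) Ha) => s Hs.
have Hps N : psum jj a (fun _ => y) N = \sum_(k < N.+1) (- (jj pi ^+ n * y)) ^+ k.
  rewrite psumE /Ssum.
  rewrite (eq_bigl (fun _ => true)); last first.
    move=> al /=; rewrite /mdeg big_ord1 ffunE; exact: (ltn_ord (al ord0)).
  rewrite (reindex (fun k : 'I_N.+1 => [ffun _ : 'I_1 => k])).
    apply: eq_bigr => k _.
    have Hm : mdeg (natf [ffun _ : 'I_1 => k]) = k by rewrite /mdeg big_ord1 !ffunE.
    rewrite big_ord1 /a Hm !ffunE rmorphXn rmorphN rmorphXn.
    by rewrite -exprMn mulNr.
  exists (fun al : {ffun 'I_1 -> 'I_N.+1} => al ord0) => al _.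
    by rewrite ffunE.
  by apply/ffunP => i; rewrite ffunE (ord1 i).
exists s; apply/eqP; rewrite -subr_eq0; apply/eqP; apply: HC.1 => m.
case: (Hs m) => N0 HN0.
pose N := maxn N0 m.
case: (HN0 N (leq_maxl _ _)) => c Hc.
have HmN : (m <= n * N.+1)%N.
  have : (m <= N)%N by apply: leq_maxr.
  by move: Hn; clear; nia.
exists ((1 + jj pi ^+ n * y) * c - (-1) ^+ N.+1 * jj pi ^+ (n * N.+1 - m) * y ^+ N.+1).
have E1 : (1 + jj pi ^+ n * y) * s - 1 = (1 + jj pi ^+ n * y) * (s - psum jj a (fun _ => y) N) +
   ((1 + jj pi ^+ n * y) * psum jj a (fun _ => y) N - 1) by ring.
have E2 : (- (jj pi ^+ n * y)) ^+ N.+1 =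
    (-1) ^+ N.+1 * jj pi ^+ m * jj pi ^+ (n * N.+1 - m) * y ^+ N.+1.
  rewrite (exprNn (jj pi ^+ n * y)) exprMn -exprM -{1}(subnKC HmN) exprD.
  move: ((-1) ^+ N.+1) (jj pi ^+ m) (jj pi ^+ (n * N.+1 - m)) (y ^+ N.+1) => u p q v.
  ring.
rewrite E1 Hc Hps geom_tel E2.
move: ((-1) ^+ N.+1) (jj pi ^+ m) (jj pi ^+ (n * N.+1 - m)) (y ^+ N.+1) (jj pi ^+ n) => u p q v w.
ring.
Qed.


Section Dens.
Variables (V : idomainType) (pi : V) (A : comPzRingType) (j : {rmorphism V -> A}).
Variables (f : A) (Bf : comPzRingType) (ph : {rmorphism A -> Bf}).
Variables (u : Bf) (Hu : ph f * u = 1) (n : nat).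

Let t := ph (j pi).
Definition Idn (x : Bf) := exists c, x = t ^+ n * c.
Lemma Idn_ideal : is_ideal Idn.
Proof.
split; first by exists 0; rewrite mulr0.
split; first by move=> x y [c ->] [d ->]; exists (c + d); rewrite mulrDr.
by move=> r x [c ->]; exists (r * c); rewrite mulrCA.
Qed.
Definition Rp := RQ Idn_ideal.
HB.instance Definition _ := GRing.ComPzRing.on Rp.
Definition qp : {rmorphism Bf -> Rp} := rq Idn_ideal.

Definition hD (x : A * nat) : Rp := qp (ph x.1) * qp u ^+ x.2.
Definition zD : A * nat := (0, 0%N).
Definition oD : A * nat := (1, 0%N).
Definition oppD (x : A * nat) : A * nat := (- x.1, x.2).
Definition addD (x y : A * nat) : A * nat := (x.1 * f ^+ y.2 + y.1 * f ^+ x.2, (x.2 + y.2)%N).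
Definition mulD (x y : A * nat) : A * nat := (x.1 * y.1, (x.2 + y.2)%N).

Let FU k : qp (ph f) ^+ k * qp u ^+ k = 1.
Proof. by rewrite -exprMn -rmorphM Hu rmorph1 expr1n. Qed.

Lemma hz : hD zD = 0. Proof. by rewrite /hD /= rmorph0 rmorph0 mul0r. Qed.
Lemma ho : hD oD = 1. Proof. by rewrite /hD /= rmorph1 rmorph1 mulr1. Qed.
Lemma hopp x : hD (oppD x) = - hD x. Proof. by rewrite /hD /= !rmorphN mulNr. Qed.
Lemma hadd x y : hD (addD x y) = hD x + hD y.
Proof.
rewrite /hD /addD !rmorphD !rmorphM !rmorphXn exprD.
have e1 := FU y.2; have e2 := FU x.2.
move: (qp (ph f) ^+ y.2) (qp u ^+ y.2) (qp (ph f) ^+ x.2) (qp u ^+ x.2) e1 e2 => a1 b1 a2 b2 e1 e2.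
transitivity (qp (ph x.1) * b2 * (a1 * b1) + qp (ph y.1) * b1 * (a2 * b2)); first by ring.
by rewrite e1 e2 !mulr1.
Qed.
Lemma hmul x y : hD (mulD x y) = hD x * hD y.
Proof. rewrite /hD /mulD !rmorphM exprD; move: (qp u ^+ x.2) (qp u ^+ y.2) => a b; ring. Qed.

Definition Dd := IM hz ho hopp hadd hmul.
Definition dmk (x : A * nat) : Dd := imk hz ho hopp hadd hmul x.
Definition psiD (a : A) : Dd := dmk (a, 0%N).

Lemma psiD_is_zmod : zmod_morphism psiD.
Proof.
move=> a b; rewrite /psiD /dmk -imkN -imkD; apply/imk_eq.
by rewrite /hD /= !expr0 !mulr1 ?addn0.
Qed.
HB.instance Definition _ := GRing.isZmodMorphism.Build A Dd psiD psiD_is_zmod.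
Lemma psiD_is_monoid : monoid_morphism psiD.
Proof.
split; first by [].
move=> a b; rewrite /psiD /dmk -imkM; apply/imk_eq.
by rewrite /hD /= addn0.
Qed.
HB.instance Definition _ := GRing.isMonoidMorphism.Build A Dd psiD psiD_is_monoid.

Lemma qp_eq0 x : qp x = 0 <-> Idn x.
Proof. exact: rq_eq0. Qed.

Lemma qt : qp t ^+ n = 0.
Proof. by rewrite -rmorphXn; apply/qp_eq0; exists 1; rewrite mulr1. Qed.

Lemma density (H : is_weak_completion_loc pi j f ph) (b : Bf) :
  exists a k c, b = ph a * u ^+ k + ph (j pi) ^+ n * c.
Proof.
have wcR : weakly_complete ((qp \o ph) \o j) pi.
  by apply: (@wc_nil _ _ _ ((qp \o ph) \o j) n); exact: qt.
have unR : is_unit ((qp \o ph) f) by exists (qp u); rewrite /= -rmorphM Hu rmorph1.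
case: (H.2.2 Rp (qp \o ph) wcR unR) => chiR [HchiR UchiR].
have wcD : weakly_complete (psiD \o j) pi.
  apply: (@wc_nil _ _ _ (psiD \o j) n).
  rewrite /= -rmorphXn; rewrite /psiD /dmk -(imk0 hz ho hopp hadd hmul); apply/imk_eq.
  rewrite hz /hD /= expr0 mulr1 rmorphXn; apply/qp_eq0; exists 1; by rewrite mulr1.
have unD : is_unit (psiD f).
  exists (dmk (1, 1%N)); rewrite /psiD /dmk -imkM -(imk1 hz ho hopp hadd hmul).
  by apply/imk_eq; rewrite ho /hD /= mulr1 expr1 -rmorphM Hu rmorph1.
case: (H.2.2 Dd psiD wcD unD) => chiD [HchiD _].
have E1 : incl (chiD b) = chiR b.
  have := UchiR ((incl (hz:=hz) (ho:=ho) (hopp:=hopp) (hadd:=hadd) (hmul:=hmul)) \o chiD).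
  apply => a /=; rewrite HchiD /psiD /dmk incl_mk /hD /= expr0 mulr1.
  by [].
have E2 : qp b = chiR b by apply: UchiR.
case: (imk_surj (chiD b)) => x Hx.
move: E1; rewrite Hx incl_mk -E2 /hD => E.
have : qp (b - ph x.1 * u ^+ x.2) = 0 by rewrite rmorphB rmorphM rmorphXn E subrr.
case/qp_eq0 => c Hc.
exists x.1, x.2, c; rewrite -Hc; ring.
Qed.
End Dens.


Section Main.
Variables (V : idomainType) (pi : V)
  (A : comPzRingType) (j : {rmorphism V -> A})
  (P : A -> Prop) (HP : is_prime_ideal P) (Hopen : exists n, P (j pi ^+ n))
  (B : A -> comPzRingType) (phi : forall f, {rmorphism A -> B f})
  (HB : forall f, ~ P f -> is_weak_completion_loc pi j f (phi f))
  (tr : forall f g, {rmorphism B f -> B (f * g)%R})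
  (Htr : forall f g, ~ P (f * g) -> forall a, tr f g (phi f a) = phi (f * g) a)
  (L : comPzRingType) (iota : forall f, {rmorphism B f -> L})
  (Hcompat : forall f g, ~ P (f * g) -> forall b, iota (f * g) (tr f g b) = iota f b)
  (Hsurj : forall x : L, exists f, ~ P f /\ exists b, x = iota f b)
  (Hker : forall f b, ~ P f -> iota f b = 0 ->
            exists g, ~ P (f * g) /\ tr f g b = 0).

Let P0 : P 0. Proof. by case: HP => [[]]. Qed.
Let PD x y : P x -> P y -> P (x + y). Proof. by case: HP => [[_ [H _]] _]; apply: H. Qed.
Let PM r x : P x -> P (r * x). Proof. by case: HP => [[_ [_ H]] _]; apply: H. Qed.
Let P1 : ~ P 1. Proof. by case: HP => _ []. Qed.
Let Pprime x y : P (x * y) -> P x \/ P y. Proof. by case: HP => _ [_ H]; apply: H. Qed.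
Let nPM x y : ~ P x -> ~ P y -> ~ P (x * y).
Proof. by move=> Hx Hy /Pprime []. Qed.
Let nPl x y : ~ P (x * y) -> ~ P x.
Proof. by move=> H Hx; apply: H; rewrite mulrC; apply: PM. Qed.
Let nPr x y : ~ P (x * y) -> ~ P y.
Proof. by move=> H Hx; apply: H; apply: PM. Qed.

Let n0 : nat := proj1_sig (cid Hopen).
Let Pn0 : P (j pi ^+ n0). Proof. exact: (proj2_sig (cid Hopen)). Qed.
Let n0_gt0 : (0 < n0)%N.
Proof. by case: (posnP n0) Pn0 => // -> ; rewrite expr0. Qed.

Local Notation kap := (K HP).
Definition al : {rmorphism A -> kap} := alpha HP.

Lemma al_jpi : al (j pi) ^+ n0 = 0.
Proof. by rewrite -rmorphXn; apply/alpha_eq0. Qed.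

Lemma wcK : weakly_complete (al \o j) pi.
Proof. exact: (@wc_nil _ _ _ (al \o j) n0 al_jpi). Qed.

Lemma al_nz f : ~ P f -> al f != 0.
Proof. by move=> Hf; apply/eqP => /alpha_eq0. Qed.

Lemma unitK f : ~ P f -> is_unit (al f).
Proof. by move=> Hf; exists (al f)^-1; rewrite mulfV //; apply: al_nz. Qed.

Definition chiS f (Hf : ~ P f) := cid ((HB Hf).2.2 kap al wcK (unitK Hf)).
Definition chi f (Hf : ~ P f) : {rmorphism B f -> kap} := proj1_sig (chiS Hf).
Lemma chi_phi f (Hf : ~ P f) a : chi Hf (phi f a) = al a.
Proof. exact: (proj1 (proj2_sig (chiS Hf))). Qed.
Lemma chi_uniq f (Hf : ~ P f) (c : {rmorphism B f -> kap}) :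
  (forall a, c (phi f a) = al a) -> forall b, c b = chi Hf b.
Proof. exact: (proj2 (proj2_sig (chiS Hf))). Qed.
Lemma chi_irr f (H1 H2 : ~ P f) b : chi H1 b = chi H2 b.
Proof. by rewrite (Prop_irrelevance H1 H2). Qed.

Lemma chi_tr f g (Hf : ~ P f) (Hfg : ~ P (f * g)) b : chi Hfg (tr f g b) = chi Hf b.
Proof.
have := @chi_uniq f Hf (chi Hfg \o tr f g); apply => a /=.
by rewrite Htr // chi_phi.
Qed.

Definition castB f g (e : f = g) (b : B f) : B g := eq_rect f B b g e.
Lemma iota_cast f g (e : f = g) b : iota g (castB e b) = iota f b.
Proof. by case: g / e. Qed.
Lemma chi_cast f g (e : f = g) (Hf : ~ P f) (Hg : ~ P g) b : chi Hg (castB e b) = chi Hf b.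
Proof. by case: g / e Hg => Hg; apply: chi_irr. Qed.
Lemma castB_sub f g (e : f = g) b c : castB e (b - c) = castB e b - castB e c.
Proof. by case: g / e. Qed.

Lemma common f g (Hf : ~ P f) (Hg : ~ P g) (b : B f) (c : B g) :
  exists (b' c' : B (f * g)),
    [/\ iota (f * g) b' = iota f b, iota (f * g) c' = iota g c,
        chi (nPM Hf Hg) b' = chi Hf b & chi (nPM Hf Hg) c' = chi Hg c].
Proof.
have e : g * f = f * g by rewrite mulrC.
have Hgf : ~ P (g * f) by rewrite e; apply: nPM.
exists (tr f g b), (castB e (tr g f c)); split.
- by apply: Hcompat; apply: nPM.
- by rewrite iota_cast; apply: Hcompat.
- exact: chi_tr.
- by rewrite (chi_cast e Hgf) chi_tr.
Qed.

Lemma WD f g (Hf : ~ P f) (Hg : ~ P g) b c :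
  iota f b = iota g c -> chi Hf b = chi Hg c.
Proof.
move=> E.
case: (common Hf Hg b c) => b' [c' [E1 E2 E3 E4]].
rewrite -E3 -E4; apply/eqP; rewrite -subr_eq0 -rmorphB; apply/eqP.
have : iota (f * g) (b' - c') = 0 by rewrite rmorphB E1 E2 E subrr.
case/(Hker (nPM Hf Hg)) => k [Hk Htk].
by rewrite -(chi_tr (nPM Hf Hg) Hk) Htk rmorph0.
Qed.

Definition rep (x : L) : {f : A & {Hf : ~ P f & {b : B f | x = iota f b}}}.
Proof.
case: (cid (Hsurj x)) => f [Hf Hb].
exists f, Hf; exact: (cid Hb).
Defined.

Definition theta (x : L) : kap :=
  chi (projT1 (projT2 (rep x))) (proj1_sig (projT2 (projT2 (rep x)))).

Lemma theta_eq f (Hf : ~ P f) b : theta (iota f b) = chi Hf b.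
Proof.
rewrite /theta; case: (rep (iota f b)) => g [Hg [c Hc]] /=.
by apply: WD; rewrite -Hc.
Qed.

Lemma theta_common (x y : L) : exists h (Hh : ~ P h) (b c : B h),
  [/\ x = iota h b, y = iota h c, theta x = chi Hh b & theta y = chi Hh c].
Proof.
case: (Hsurj x) => f [Hf [b ->]]; case: (Hsurj y) => g [Hg [c ->]].
case: (common Hf Hg b c) => b' [c' [E1 E2 E3 E4]].
exists (f * g), (nPM Hf Hg), b', c'; split => //.
- by rewrite theta_eq E3.
- by rewrite theta_eq E4.
Qed.

Lemma theta_is_zmod : zmod_morphism theta.
Proof.
move=> x y; case: (theta_common x y) => h [Hh [b [c [-> -> E1 E2]]]].
by rewrite E1 E2 -(rmorphB (iota h)) (theta_eq Hh) rmorphB.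
Qed.
HB.instance Definition _ := GRing.isZmodMorphism.Build L kap theta theta_is_zmod.
Lemma theta_is_monoid : monoid_morphism theta.
Proof.
split.
  by rewrite -(rmorph1 (iota 1)) (theta_eq P1) rmorph1.
move=> x y; case: (theta_common x y) => h [Hh [b [c [-> -> E1 E2]]]].
by rewrite E1 E2 -(rmorphM (iota h)) (theta_eq Hh) rmorphM.
Qed.
HB.instance Definition _ := GRing.isMonoidMorphism.Build L kap theta theta_is_monoid.

Definition PL : L -> Prop :=
    fun x => exists f, ~ P f /\ exists b, ext_ideal (phi f) P b /\ x = iota f b.

Lemma theta_PL x : theta x = 0 <-> PL x.
Proof.
split; last first.
  case=> f [Hf [b [[m [a [bb [Ha ->]]]] ->]]].
  rewrite theta_eq rmorph_sum big1 // => i _.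
  by rewrite rmorphM chi_phi; move/alpha_eq0: (Ha i) => /= ->; rewrite mul0r.
case: (Hsurj x) => f [Hf [b ->]]; rewrite theta_eq => Hb.
case: (HB Hf).2.1 => u Hu.
case: (density Hu n0 (HB Hf) b) => a [k [c Eb]].
have Hcu : al f * chi Hf u = 1 by rewrite -(chi_phi Hf) -rmorphM Hu rmorph1.
have Hu0 : chi Hf u ^+ k != 0.
  apply/eqP => H0.
  have : (al f) ^+ k * chi Hf u ^+ k = 1 by rewrite -exprMn Hcu expr1n.
  by rewrite H0 mulr0 => /eqP; rewrite eq_sym oner_eq0.
have Pa : P a.
  apply/alpha_eq0; move: Hb; rewrite Eb rmorphD !rmorphM !rmorphXn !chi_phi.
  rewrite -/al al_jpi mul0r addr0 => /eqP; rewrite mulf_eq0 (negPf Hu0) orbF.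
  by move/eqP.
exists f; split => //; exists b; split => //.
exists 2%N, (fun i : 'I_2 => nth 0 [:: a; j pi ^+ n0] i),
  (fun i : 'I_2 => nth 0 [:: u ^+ k; c] i); split.
  by case=> [[|[|]]] //=.
by rewrite !big_ord_recl big_ord0 /= addr0 Eb rmorphXn.
Qed.


Lemma unit_of (g : A) (Hg : ~ P g) (v y : B g) (vi : B g) :
  v * vi = 1 -> is_unit (v + phi g (j pi) ^+ n0 * y).
Proof.
move=> Hv.
have wc : weakly_complete (phi g \o j) pi := (HB Hg).1.
case: (@unit_1p _ _ _ (phi g \o j) wc n0 (vi * y) n0_gt0) => r Hr.
exists (vi * r).
have Hr' : (1 + phi g (j pi) ^+ n0 * (vi * y)) * r = 1 := Hr.
move: Hr'; move: (phi g (j pi) ^+ n0) => t Hr'.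
have E : (v + t * y) * vi = 1 + t * (vi * y) by rewrite mulrDl Hv; ring.
by rewrite mulrA E.
Qed.

Lemma PL_unit x : ~ PL x -> is_unit x.
Proof.
move=> HPL.
case: (Hsurj x) => f [Hf [b Hx]].
have Hb : chi Hf b != 0 by apply/eqP; rewrite -(theta_eq Hf) -Hx => /theta_PL.
case: (HB Hf).2.1 => u Hu.
case: (density Hu n0 (HB Hf) b) => a [k [c Eb]].
have Pa : ~ P a.
  move=> Pa; move/eqP: Hb; apply; rewrite Eb rmorphD !rmorphM !rmorphXn !chi_phi.
  have -> : al a = 0 by apply/alpha_eq0.
  by rewrite -/al al_jpi !mul0r addr0.
have Hfa : ~ P (f * a) by apply: nPM.
case: (HB Hfa).2.1 => w Hw.
set g := f * a in Hfa Hw.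
have Hu' : phi g f * tr f a u = 1 by rewrite -(Htr Hfa) -rmorphM Hu rmorph1.
have Hgb : tr f a b = phi g a * tr f a u ^+ k + phi g (j pi) ^+ n0 * tr f a c.
  by rewrite Eb rmorphD !rmorphM !rmorphXn !(Htr Hfa).
have Hv : (phi g a * tr f a u ^+ k) * ((phi g f * w) * phi g f ^+ k) = 1.
  transitivity ((phi g f * phi g a * w) * (phi g f * tr f a u) ^+ k).
    rewrite exprMn; move: (tr f a u ^+ k) (phi g f ^+ k) => p1 p2; ring.
  by rewrite Hu' expr1n mulr1 -rmorphM.
case: (unit_of Hfa (tr f a c) Hv) => r Hr.
exists (iota g r).
by rewrite Hx -(Hcompat Hfa) -rmorphM Hgb Hr rmorph1.
Qed.

Lemma thetaD x y : theta (x + y) = theta x + theta y. Proof. exact: rmorphD. Qed.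
Lemma thetaM x y : theta (x * y) = theta x * theta y. Proof. exact: rmorphM. Qed.
Lemma theta0 : theta 0 = 0. Proof. exact: rmorph0. Qed.
Lemma theta1 : theta 1 = 1. Proof. exact: rmorph1. Qed.

Lemma main_local : local_with_max PL.
Proof.
split; last split.
- split; first by apply/theta_PL; rewrite rmorph0.
  split.
    by move=> x y /theta_PL Hx /theta_PL Hy; apply/theta_PL; rewrite thetaD Hx Hy addr0.
  by move=> r x /theta_PL Hx; apply/theta_PL; rewrite thetaM Hx mulr0.
- by move/theta_PL; rewrite theta1 => /eqP; rewrite oner_eq0.
- exact: PL_unit.
Qed.

Lemma main_all :
  local_with_max PL /\
  exists (kappa : fieldType) (theta : {rmorphism L -> kappa})
         (alpha : {rmorphism A -> kappa}),
    (forall z, exists x, theta x = z) /\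
    (forall x, theta x = 0 <-> PL x) /\
    (forall a, alpha a = 0 <-> P a) /\
    (forall z, exists a b, ~ P b /\ z = alpha a / alpha b).
Proof.
split; first exact: main_local.
exists kap, theta, al; split; last split; last split.
- move=> z; case: (alpha_frac z) => a [s [Hs ->]].
  case: (HB Hs).2.1 => w Hw.
  exists (iota s (phi s a * w)).
  transitivity (chi Hs (phi s a * w)); first exact: theta_eq.
  rewrite rmorphM chi_phi.
  have Hcw : al s * chi Hs w = 1 by rewrite -(chi_phi Hs) -rmorphM Hw rmorph1.
  congr (_ * _).
  by rewrite -[LHS]mul1r -(mulVf (al_nz Hs)) -mulrA Hcw mulr1.
- exact: theta_PL.
- exact: alpha_eq0.
- exact: alpha_frac.
Qed.

End Main.

Theorem mainTheorem1
  (V : idomainType) (pi : V) (p : nat) (HV : cdvr pi p)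
  (A : comPzRingType) (j : {rmorphism V -> A}) (HA : fctf j pi)
  (P : A -> Prop) (HP : is_prime_ideal P) (Hopen : exists n, P (j pi ^+ n))
  (* the rings A[f], f not in P *)
  (B : A -> comPzRingType) (phi : forall f, {rmorphism A -> B f})
  (HB : forall f, ~ P f -> is_weak_completion_loc pi j f (phi f))
  (* transition maps A[f] -> A[fg] of the direct system *)
  (tr : forall f g, {rmorphism B f -> B (f * g)%R})
  (Htr : forall f g, ~ P (f * g) -> forall a, tr f g (phi f a) = phi (f * g) a)
  (* L = A_[P] = colim_{f notin P} A[f], with structure maps iota f *)
  (L : comPzRingType) (iota : forall f, {rmorphism B f -> L})
  (Hcompat : forall f g, ~ P (f * g) -> forall b, iota (f * g) (tr f g b) = iota f b)
  (Hsurj : forall x : L, exists f, ~ P f /\ exists b, x = iota f b)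
  (Hker : forall f b, ~ P f -> iota f b = 0 ->
            exists g, ~ P (f * g) /\ tr f g b = 0) :
  let PL : L -> Prop :=
    fun x => exists f, ~ P f /\ exists b, ext_ideal (phi f) P b /\ x = iota f b in
  local_with_max PL /\
  exists (kappa : fieldType) (theta : {rmorphism L -> kappa})
         (alpha : {rmorphism A -> kappa}),
    (forall z, exists x, theta x = z) /\
    (forall x, theta x = 0 <-> PL x) /\
    (forall a, alpha a = 0 <-> P a) /\
    (forall z, exists a b, ~ P b /\ z = alpha a / alpha b).
Proof.
move=> PL.
exact: (main_all HP Hopen HB Htr Hcompat Hsurj Hker).
Qed.
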